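(* Let $F=\{f_1,\dots,f_m\}$ be an IFS of contracting similitudes of $\mathbb{R}^d$ with attractor $A$. (a) If $h\in\mathcal{N}$, then $f_k^{-1}\circ h\circ f_j\in\mathcal{N}$ for all $j,k\in\{1,\dots,m\}$. (b) With $K=\bigcup_{h\in\mathcal{N}}h(A)$, one has $K\subseteq f_k(K)$ for each $k$. (c) $f_k(U_1)\subseteq U_1$ for each $k=1,\dots,m$.
   Context: $F^0=\{\mathrm{id}\}$, $F^k$ is the set of maps $f_{i_1}\circ\cdots\circ f_{i_k}$, $F^*=\bigcup_{k\ge0}F^k$; a piece of $A$ is $f'(A)$ with $f'\in F^*$. $\mathcal{N}$ is the set of all maps $h=f^{-1}g$ with $f,g\in F^*$ (of arbitrary lengths) such that $h(A)$ contains no piece of $A$. $d(x,E)=\inf\{|x-y|:y\in E\}$, and $U_1=\{x\in\mathbb{R}^d: d(x,A)<\inf_{h\in\mathcal{N}} d(x,h(A))\}$ (infimum over the empty set is $+\infty$). *)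

(* Defs.v *)
From HB Require Import structures.
From mathcomp Require Import all_boot all_order all_algebra.
From mathcomp Require Import all_classical all_reals all_analysis.
Set Implicit Arguments. Unset Strict Implicit. Unset Printing Implicit Defensive.
Import Order.TTheory GRing.Theory Num.Theory.
Import numFieldNormedType.Exports.
Local Open Scope classical_set_scope.
Local Open Scope ring_scope.

Section IFSDefs.
Variables (R : realType) (d : nat).
Notation V := 'rV[R]_d.

Definition enorm (x : V) : R := Num.sqrt (\sum_(i < d) (x ord0 i) ^+ 2).

Definition edist (x y : V) : R := enorm (x - y).

Definition contracting_similitude (f : V -> V) : Prop :=
  exists r : R, 0 < r < 1 /\ forall x y, edist (f x) (f y) = r * edist x y.

(* inverse map (f is a bijection of R^d when it is a similitude) *)
Definition sim_inv (f : V -> V) (y : V) : V := xget 0 [set x | f x = y].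

Variable m : nat.
Variable F : 'I_m -> (V -> V).
Variable A : set V.

Definition comp_word (s : seq 'I_m) : V -> V := foldr (fun i g => F i \o g) id s.
Definition Fstar : set (V -> V) := [set g | exists s : seq 'I_m, g = comp_word s].

Definition piece : set (set V) := [set P | exists2 g, Fstar g & P = g @` A].

Definition Nset : set (V -> V) :=
  [set h | (exists f, exists g, [/\ Fstar f, Fstar g & h = sim_inv f \o g]) /\
           ~ (exists2 P, piece P & P `<=` h @` A)].

(* d(x,E) as an extended real (inf over the empty set is +oo) *)
Definition dist_set (x : V) (E : set V) : \bar R :=
  ereal_inf [set (edist x y)%:E | y in E].

Definition U1 : set V :=
  [set x | (dist_set x A < ereal_inf [set dist_set x (h @` A) | h in Nset])%E].

Definition Kset : set V := \bigcup_(h in Nset) (h @` A).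

End IFSDefs.

(* Main.v *)
Require Import Defs.
From HB Require Import structures.
From mathcomp Require Import all_boot all_order all_algebra.
From mathcomp Require Import all_classical all_reals all_analysis.
From mathcomp Require Import ring lra.
Import Order.TTheory GRing.Theory Num.Theory.
Import numFieldNormedType.Exports.
Local Open Scope classical_set_scope.
Local Open Scope ring_scope.
Set Implicit Arguments. Unset Strict Implicit. Unset Printing Implicit Defensive.
Definition dot (R : realType) (d : nat) (x y : 'rV[R]_d) : R :=
  \sum_(i < d) x ord0 i * y ord0 i.

Lemma dotC (R : realType) d (x y : 'rV[R]_d) : dot x y = dot y x.
Proof. by apply: eq_bigr => i _; rewrite mulrC. Qed.

Lemma dotDl (R : realType) d (x y z : 'rV[R]_d) : dot (x + y) z = dot x z + dot y z.
Proof. by rewrite /dot -big_split; apply: eq_bigr => i _; rewrite !mxE mulrDl. Qed.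

Lemma dotNl (R : realType) d (x z : 'rV[R]_d) : dot (- x) z = - dot x z.
Proof. by rewrite /dot -sumrN; apply: eq_bigr => i _; rewrite !mxE mulNr. Qed.

Lemma dotZl (R : realType) d a (x z : 'rV[R]_d) : dot (a *: x) z = a * dot x z.
Proof. by rewrite /dot mulr_sumr; apply: eq_bigr => i _; rewrite !mxE mulrA. Qed.

Lemma dotBl (R : realType) d (x y z : 'rV[R]_d) : dot (x - y) z = dot x z - dot y z.
Proof. by rewrite dotDl dotNl. Qed.
Lemma dotBr (R : realType) d (x y z : 'rV[R]_d) : dot z (x - y) = dot z x - dot z y.
Proof. by rewrite dotC dotBl dotC (dotC y). Qed.
Lemma dotZr (R : realType) d a (x z : 'rV[R]_d) : dot z (a *: x) = a * dot z x.
Proof. by rewrite dotC dotZl dotC. Qed.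

Lemma dot_ge0 (R : realType) d (x : 'rV[R]_d) : 0 <= dot x x.
Proof. by apply: sumr_ge0 => i _; rewrite -expr2 sqr_ge0. Qed.

Lemma dot_eq0 (R : realType) d (x : 'rV[R]_d) : dot x x = 0 -> x = 0.
Proof.
move=> h; apply/rowP => i; rewrite mxE.
have h0 : forall j : 'I_d, true -> 0 <= x ord0 j * x ord0 j.
  by move=> j _; rewrite -expr2 sqr_ge0.
have := psumr_eq0P h0 h (i := i) isT.
by move/eqP; rewrite mulf_eq0 orbb => /eqP.
Qed.

Lemma enorm2 (R : realType) d (x : 'rV[R]_d) : enorm x ^+ 2 = dot x x.
Proof. by rewrite /enorm sqr_sqrtr // -/(dot x x) ?dot_ge0 //; apply: sumr_ge0 => i _; rewrite sqr_ge0. Qed.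

Lemma dotDr (R : realType) d (x y z : 'rV[R]_d) : dot z (x + y) = dot z x + dot z y.
Proof. by rewrite dotC dotDl dotC (dotC y). Qed.

Lemma dot00 (R : realType) d : dot (0 : 'rV[R]_d) 0 = 0.
Proof. by rewrite /dot big1 // => i _; rewrite mxE mul0r. Qed.

Lemma sim_surj (R : realType) d (f : 'rV[R]_d -> 'rV[R]_d) (r : R) : 0 < r ->
  (forall x y, Defs.edist (f x) (f y) = r * Defs.edist x y) -> forall y, exists x, f x = y.
Proof.
move=> r0 hf.
pose g := fun x => f x - f 0.
have gE : forall x, g x = f x - f 0 by [].
clearbody g.
have hd : forall x y, dot (g x - g y) (g x - g y) = r^+2 * dot (x - y) (x - y).
  move=> x y; rewrite -!enorm2.
  have -> : g x - g y = f x - f y by rewrite !gE opprB addrA subrK.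
  by rewrite -[enorm (f x - f y)]/(Defs.edist (f x) (f y)) hf exprMn.
have g0 : g 0 = 0 by rewrite gE subrr.
have hn : forall x, dot (g x) (g x) = r^+2 * dot x x.
  by move=> x; have := hd x 0; rewrite g0 !subr0.
have hi : forall x y, dot (g x) (g y) = r^+2 * dot x y.
  move=> x y; have := hd x y; rewrite !dotBl !dotBr !hn (dotC (g y)) (dotC y).
  set c := r^+2 => E.
  have : 2 * dot (g x) (g y) = 2 * (c * dot x y).
    set a := dot (g x) (g y) in E *; set b := dot x y in E *.
    rewrite mulrDr in E; lra.
  by move/(mulfI (_ : 2 != 0)) => -> //.
have hl : forall a x y, g (a *: x + y) = a *: g x + g y.
  move=> a x y; apply/eqP; rewrite -subr_eq0; apply/eqP; apply: dot_eq0.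
  rewrite opprD addrA !dotBl !dotBr !dotZl !dotZr !hi !dotDl !dotDr !dotZl !dotZr.
  rewrite (dotC y x); ring.
pose M := \matrix_(i < d, j < d) g (delta_mx 0 i) 0 j.
have hM : forall x, g x = x *m M.
  move=> x; rewrite mulmx_sum_row {1}(row_sum_delta x).
  apply: (big_ind2 (fun u v => g u = v)) => //.
  - move=> u1 v1 u2 v2 h1 h2; have := hl 1 u1 u2; rewrite !scale1r h1 h2 => <- //.
  - move=> i _; have := hl (x 0 i) 'e_i 0; rewrite !addr0 g0 addr0 => ->.
    by congr (_ *: _); apply/rowP => j; rewrite !mxE.
have Mu : M \in unitmx.
  rewrite -row_free_unit; apply: inj_row_free => v.
  rewrite -hM => /(congr1 (fun z => dot z z)); rewrite hn dot00 => /eqP.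
  rewrite mulf_eq0 expf_eq0 /= (gt_eqF r0) /= => /eqP; exact: dot_eq0.
move=> y; exists ((y - f 0) *m invmx M).
have : g ((y - f 0) *m invmx M) = y - f 0 by rewrite hM mulmxKV.
by rewrite gE => /eqP; rewrite subr_eq => /eqP ->; rewrite subrK.
Qed.

Lemma sim_inj (R : realType) d (f : 'rV[R]_d -> 'rV[R]_d) :
  contracting_similitude f -> injective f.
Proof.
move=> [r [/andP [r0 _] hr]] x y e.
have := hr x y; rewrite e /Defs.edist subrr.
have -> : enorm (0 : 'rV[R]_d) = 0 by rewrite /enorm big1 ?sqrtr0 // => i _; rewrite mxE expr0n.
move/esym/eqP; rewrite mulf_eq0 (gt_eqF r0) /= => /eqP h.
have : dot (x - y) (x - y) = 0 by rewrite -enorm2 h expr0n.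
by move/dot_eq0/eqP; rewrite subr_eq0 => /eqP.
Qed.

Lemma sim_surj' (R : realType) d (f : 'rV[R]_d -> 'rV[R]_d) :
  contracting_similitude f -> forall y, exists x, f x = y.
Proof. by move=> [r [/andP [r0 _] hr]]; apply: (sim_surj r0 hr). Qed.

Lemma sim_invE (R : realType) d (f : 'rV[R]_d -> 'rV[R]_d) x y :
  injective f -> f x = y -> sim_inv f y = x.
Proof. by move=> fi fx; apply: xget_unique => // z /= fz; apply: fi; rewrite fz fx. Qed.

Lemma sim_invK (R : realType) d (f : 'rV[R]_d -> 'rV[R]_d) y :
  injective f -> (forall y, exists x, f x = y) -> f (sim_inv f y) = y.
Proof. by move=> fi fs; have [x fx] := fs y; rewrite (sim_invE fi fx). Qed.

Lemma cw_bij (R : realType) d m (F : 'I_m -> ('rV[R]_d -> 'rV[R]_d))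
  (HF : forall i, contracting_similitude (F i)) (s : seq 'I_m) :
  injective (comp_word F s) /\ (forall y, exists x, comp_word F s x = y).
Proof.
elim: s => [|i s [IHi IHs]] /=; first by split => // y; exists y.
split.
  by move=> x y /= /(sim_inj (HF i)) /IHi.
move=> y; have [z fz] := sim_surj' (HF i) y; have [x hx] := IHs z.
by exists x => /=; rewrite hx.
Qed.

Lemma cw_rcons (R : realType) d m (F : 'I_m -> ('rV[R]_d -> 'rV[R]_d)) s k x :
  comp_word F (rcons s k) x = comp_word F s (F k x).
Proof. by elim: s => [|i s IH] //=; rewrite IH. Qed.

Theorem mainTheorem5 (R : realType) (d m : nat) (F : 'I_m -> ('rV[R]_d -> 'rV[R]_d))
  (A : set 'rV[R]_d)
  (HF : forall i, contracting_similitude (F i))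
  (HA0 : A !=set0) (HAc : compact A)
  (HAinv : A = \bigcup_(i in [set: 'I_m]) (F i @` A)) :
  (forall (h : 'rV[R]_d -> 'rV[R]_d) (j k : 'I_m),
      Nset F A h -> Nset F A (fun x => sim_inv (F k) (h (F j x)))) /\
  (forall k : 'I_m, Kset F A `<=` F k @` Kset F A) /\
  (forall k : 'I_m, F k @` U1 F A `<=` U1 F A).
Proof.
have FiA : forall j a, A a -> A (F j a).
  by move=> j a Aa; rewrite HAinv; exists j => //; exists a.
have AFi : forall a, A a -> exists j, exists2 a', A a' & a = F j a'.
  by move=> a; rewrite {1}HAinv => -[j _ [a' Aa' <-]]; exists j, a'.
have parta : forall (h : 'rV[R]_d -> 'rV[R]_d) (j k : 'I_m),
      Nset F A h -> Nset F A (fun x => sim_inv (F k) (h (F j x))).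
  move=> h j k [[f [g [[s ->] [t ->] ->]]] Hnp]; split.
    exists (comp_word F (rcons s k)), (comp_word F (rcons t j)); split;
      [by exists (rcons s k) | by exists (rcons t j) |].
    apply: funext => x /=; rewrite cw_rcons; apply/esym/sim_invE.
      by move=> u v; rewrite !cw_rcons => /(proj1 (cw_bij HF s)) /(sim_inj (HF k)).
    rewrite cw_rcons sim_invK ?sim_invK //.
    - exact: (proj1 (cw_bij HF s)).
    - exact: (proj2 (cw_bij HF s)).
    - exact: sim_inj.
    - exact: sim_surj'.
  move=> [P [phi [u ->] ->] sub]; apply: Hnp.
  exists ((F k \o comp_word F u) @` A).
    by exists (F k \o comp_word F u) => //; exists (k :: u).
  move=> _ [a Aa <-].
  have [a' Aa' e] := sub (comp_word F u a) (ex_intro2 _ _ a Aa erefl).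
  exists (F j a'); first exact: FiA.
  by rewrite /= -e sim_invK //; [exact: sim_inj | exact: sim_surj'].
split => //; split.
  move=> k x [h Nh [a Aa <-]].
  have [j [a' Aa' ->]] := AFi a Aa.
  exists (sim_inv (F k) (h (F j a'))).
    by exists (fun x => sim_inv (F k) (h (F j x))); [exact: parta | exists a'].
  by rewrite sim_invK //; [exact: sim_inj | exact: sim_surj'].
move=> k _ [x Ux <-].
have [r [/andP [r0 _] hr]] := HF k.
move: Ux; rewrite /U1 /= => Ux.
set I := ereal_inf [set dist_set x (h @` A) | h in Nset F A] in Ux.
have [_ [a Aa <-] ltI] := ereal_inf_lt Ux.
apply: (le_lt_trans (y := (r * Defs.edist x a)%:E)).
  rewrite -hr; apply: ereal_inf_lbound; exists (F k a) => //; exact: FiA.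
apply: (lt_le_trans (y := (r%:E * I)%E)).
  by rewrite EFinM lte_pmul2l // lte_fin.
apply: le_ereal_inf_tmp => _ [h Nh <-].
apply: le_ereal_inf_tmp => _ [_ [b Ab <-] <-].
have [j [b' Ab' ->]] := AFi b Ab.
set z := sim_inv (F k) (h (F j b')).
have -> : h (F j b') = F k z.
  by rewrite /z sim_invK //; [exact: sim_inj | exact: sim_surj'].
rewrite hr EFinM lee_pmul2l ?lte_fin //.
apply: (le_trans (y := dist_set x ((fun x => sim_inv (F k) (h (F j x))) @` A))).
  by apply: ereal_inf_lbound; exists (fun x => sim_inv (F k) (h (F j x))) => //; exact: parta.
by apply: ereal_inf_lbound; exists z => //; exists b'.
Qed.
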